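(* In the setting below, assume that $g(x)$ and $l(x)$ are both self-reciprocal. If $\gcd\big(r_{22}(x),\ g_{11}(x)\bar g_{11}(x)+g_{12}(x)\bar g_{12}(x)\big)\neq 1$, then $C$ is not Euclidean LCD.
   Context: Let $q$ be a prime power, $F=\mathbb{F}_q$, $m\ge1$ with $\gcd(q,m)=1$, and $R=F[x]/\langle x^m-1\rangle$; elements of $R$ are represented by polynomials of degree $<m$ and identified with their coefficient vectors in $F^m$. A quasi-cyclic code of length $2m$ and index $2$ is an $R$-submodule $C\subseteq R^2$. The Euclidean inner product of $(a_1,a_2),(b_1,b_2)\in R^2$ is the sum of the standard dot products of the coefficient vectors of $a_1,b_1$ and of $a_2,b_2$; $C$ is Euclidean LCD if $C\cap C^{\perp_e}=\{0\}$. For a nonzero polynomial $f$ of degree $k$, $f^*(x)=x^kf(x^{-1})$; $f$ is self-reciprocal if $f^*=\alpha f$ for some $\alpha\in F$. For a polynomial $f$ of degree at most $m$, $\bar f(x)=x^m f(x^{-1})$. Suppose $C$ is generated as an $R$-module by $(g_{11}(x),g_{12}(x))$ and $(0,g_{22}(x))$, where $g_{11},g_{12},g_{22}\in F[x]$ satisfy: $g_{11}\mid x^m-1$, $g_{22}\mid x^m-1$, $\deg g_{12}<\deg g_{22}$, and $g_{11}g_{22}\mid (x^m-1)g_{12}$. Define $g=\gcd(g_{11},g_{22})$, $l=(x^m-1)/\mathrm{lcm}(g_{11},g_{22})$, $g_{22}=g\,g_{22}'$, $r_{22}=\gcd(g_{22}',g_{22}'^* )$. *)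

(* Defs.v *)
From mathcomp Require Import all_boot all_algebra.
Set Implicit Arguments. Unset Strict Implicit. Unset Printing Implicit Defensive.
Import GRing.Theory.
Local Open Scope ring_scope.

Section QC.
Variable F : fieldType.

Definition xm1 (m : nat) : {poly F} := 'X^m - 1.

(* reciprocal f^*(x) = x^(deg f) f(1/x) *)
Definition recip (f : {poly F}) : {poly F} :=
  \poly_(i < size f) f`_((size f).-1 - i).

Definition self_reciprocal (f : {poly F}) : Prop :=
  f != 0 /\ exists alpha : F, recip f = alpha *: f.

(* bar f (x) = x^m f(1/x), for deg f <= m *)
Definition polybar (m : nat) (f : {poly F}) : {poly F} :=
  \poly_(i < m.+1) f`_(m - i).

Definition lcmp (p q : {poly F}) : {poly F} := (p * q) %/ gcdp p q.

(* Elements of R = F[x]/<x^m-1> are represented by polynomials of size <= m;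
   R^2 elements are pairs.  The R-submodule generated by (g11,g12), (0,g22): *)
Definition in_qc_code (m : nat) (g11 g12 g22 : {poly F})
  (c : {poly F} * {poly F}) : Prop :=
  exists a b : {poly F},
    c = ((a * g11) %% xm1 m, (a * g12 + b * g22) %% xm1 m).

Definition eucl_ip (m : nat) (u v : {poly F} * {poly F}) : F :=
  \sum_(i < m) (u.1`_i * v.1`_i + u.2`_i * v.2`_i).

Definition in_eucl_dual (m : nat) (g11 g12 g22 : {poly F})
  (v : {poly F} * {poly F}) : Prop :=
  [/\ (size v.1 <= m)%N, (size v.2 <= m)%N &
      forall c, in_qc_code m g11 g12 g22 c -> eucl_ip m c v = 0].

Definition eucl_LCD (m : nat) (g11 g12 g22 : {poly F}) : Prop :=
  forall v, in_qc_code m g11 g12 g22 v -> in_eucl_dual m g11 g12 g22 v ->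
    v = (0, 0).

End QC.

(* Main.v *)
Require Import Defs.
From mathcomp Require Import all_boot all_algebra all_field.
From mathcomp Require Import fingroup cyclic.
From mathcomp Require Import ring zify.
Import GRing.Theory.
Local Open Scope ring_scope.
Set Implicit Arguments. Unset Strict Implicit.

Lemma xm1E (F : fieldType) m : xm1 F m = 'X^m - 1.
Proof. by []. Qed.

Lemma size_xm1 (F : fieldType) m : (0 < m)%N -> size (xm1 F m) = m.+1.
Proof. by move=> m0; rewrite xm1E -polyC1 size_XnsubC. Qed.

Lemma xm1_neq0 (F : fieldType) m : (0 < m)%N -> xm1 F m != 0.
Proof. by move=> m0; rewrite -size_poly_eq0 size_xm1. Qed.

Lemma xm1_dvd (F : fieldType) m k : xm1 F m %| 'X^(m * k) - 1.
Proof. by rewrite exprM subrX1 dvdp_mulIl. Qed.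

Lemma mod_eq_dvd (F : fieldType) (d p q : {poly F}) : d %| p - q -> p %% d = q %% d.
Proof.
move=> H; have -> : p = (p - q) + q by rewrite subrK.
by rewrite modpD (modp_eq0 H) add0r.
Qed.

Lemma Xn_mod (F : fieldType) m n : (0 < m)%N ->
  'X^n %% xm1 F m = 'X^(n %% m) :> {poly F}.
Proof.
move=> m0; rewrite -[RHS](@modp_small _ _ (xm1 F m)); last first.
  by rewrite size_xm1 // size_polyXn ltnS ltn_pmod.
apply: mod_eq_dvd.
have -> : 'X^n - 'X^(n %% m) = ('X^(m * (n %/ m)) - 1) * 'X^(n %% m) :> {poly F}.
  by rewrite mulrBl mul1r -exprD mulnC -divn_eq.
exact: dvdp_mulr (xm1_dvd _ _ _).
Qed.

Lemma natr_neq0 (F : finFieldType) m : coprime #|F| m -> (m%:R : F) != 0.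
Proof.
move=> cop; have [p pp pc] := finPcharP F.
have cF : (#|F|%:R : F) = 0.
  have := @expg_cardG _ [set: F]%G (GRing.one F) (in_setT _).
  rewrite /= cardsT FinRing.zmodXgE.
  by move=> ->.
apply/negP => /eqP mF.
have h1 : (p %| #|F|)%N by rewrite (dvdn_pcharf pc) cF.
have h2 : (p %| m)%N by rewrite (dvdn_pcharf pc) mF.
have : (p %| gcdn #|F| m)%N by rewrite dvdn_gcd h1 h2.
 rewrite (eqP cop) dvdn1 => /eqP p1.
by move: pp; rewrite p1.
Qed.

Definition cj (F : fieldType) (m : nat) (f : {poly F}) := f \Po 'X^(m.-1).

Lemma dvd_of_mod_eq (F : fieldType) (d p q : {poly F}) : p %% d = q %% d -> d %| p - q.
Proof. by move=> H; apply/modp_eq0P; rewrite modpD modpN H subrr. Qed.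

Lemma dvd_scale (F : fieldType) (d p : {poly F}) c : d %| p -> d %| c *: p.
Proof. by move=> H; rewrite -mul_polyC dvdp_mull. Qed.

Lemma dvd_sumB (F : fieldType) (d : {poly F}) n (A B : 'I_n -> {poly F}) :
  (forall i, d %| A i - B i) -> d %| \sum_(i < n) A i - \sum_(i < n) B i.
Proof.
move=> H; rewrite -sumrB; apply: (big_ind (fun p => d %| p)).
- by rewrite dvdp0.
- by move=> x y; apply: dvdp_add.
- by move=> i _; apply: H.
Qed.

Lemma Xn_cong (F : fieldType) m a b : (0 < m)%N -> a = b %[mod m] ->
  xm1 F m %| 'X^a - 'X^b.
Proof. by move=> m0 H; apply: dvd_of_mod_eq; rewrite !Xn_mod // H. Qed.

Lemma cj_xm1 (F : fieldType) m : xm1 F m %| cj m (xm1 F m).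
Proof.
rewrite /cj xm1E comp_polyB comp_Xn_poly -polyC1 comp_polyC polyC1 -exprM mulnC.
exact: xm1_dvd.
Qed.

Lemma cj_dvd (F : fieldType) m (f : {poly F}) : (0 < m)%N -> xm1 F m %| f -> xm1 F m %| cj m f.
Proof.
move=> m0 H; rewrite -(divpK H) /cj comp_polyM.
exact: dvdp_mull (cj_xm1 _ _).
Qed.

Lemma cj_cong (F : fieldType) m (f g : {poly F}) : (0 < m)%N ->
  xm1 F m %| f - g -> xm1 F m %| cj m f - cj m g.
Proof. by move=> m0 H; rewrite /cj -comp_polyB; apply: cj_dvd. Qed.

Lemma cjM (F : fieldType) m (f g : {poly F}) : cj m (f * g) = cj m f * cj m g.
Proof. exact: comp_polyM. Qed.

Lemma comp_sumE (F : fieldType) n (f q : {poly F}) : (size f <= n)%N ->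
  f \Po q = \sum_(i < n) f`_i *: q ^+ i.
Proof.
move=> H; rewrite comp_polyE (big_ord_widen n (fun i => f`_i *: q ^+ i) H).
rewrite big_mkcond /=; apply: eq_bigr => i _.
by case: ifP => // /negbT; rewrite -leqNgt => /(nth_default 0) ->; rewrite scale0r.
Qed.

Lemma comp_cong (F : fieldType) m k j (f : {poly F}) : (0 < m)%N -> k = j %[mod m] ->
  xm1 F m %| (f \Po 'X^k) - (f \Po 'X^j).
Proof.
move=> m0 H; rewrite !comp_polyE; apply: dvd_sumB => i.
rewrite -scalerBr; apply: dvd_scale; rewrite -!exprM; apply: Xn_cong => //.
by rewrite -modnMml H modnMml.
Qed.

Lemma cjcj (F : fieldType) m (f : {poly F}) : (0 < m)%N -> xm1 F m %| cj m (cj m f) - f.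
Proof.
move=> m0; rewrite /cj -comp_polyA comp_Xn_poly -exprM.
have := @comp_cong F m (m.-1 * m.-1) 1 f m0; rewrite expr1 comp_polyXr; apply.
case: m m0 => [//|[|n]] _ //=.
have -> : (n.+1 * n.+1 = n * n.+2 + 1)%N by nia.
by rewrite modnMDl.
Qed.

Lemma bar_cj (F : fieldType) m (f : {poly F}) : (0 < m)%N -> (size f <= m.+1)%N ->
  xm1 F m %| polybar m f - cj m f.
Proof.
move=> m0 sf; rewrite /polybar /cj poly_def (comp_sumE _ sf).
rewrite (reindex_inj rev_ord_inj) /=; apply: dvd_sumB => i.
rewrite subSS subKn; last by rewrite -ltnS.
rewrite -scalerBr; apply: dvd_scale; rewrite -exprM; apply: Xn_cong => //.
apply/eqP; rewrite -(eqn_modDr i) subnK; last by rewrite -ltnS.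
by rewrite -mulSnr prednK // modnn ?modnMl ?modnMr.
Qed.

Lemma bar_recip (F : fieldType) m (f : {poly F}) : (size f <= m.+1)%N ->
  polybar m f = 'X^(m.+1 - size f) * recip f.
Proof.
move=> sf; apply/polyP => j; rewrite coefXnM !coef_poly.
case: (ltnP j (m.+1 - size f)) => jk.
  have -> : (j < m.+1)%N by lia.
  by rewrite nth_default //; change (size f <= m - j)%N; lia.
case: (ltnP j m.+1) => jm.
  have -> : (j - (m.+1 - size f) < size f)%N by lia.
  congr nth; lia.
have -> : (j - (m.+1 - size f) < size f)%N = false by lia.
by [].
Qed.

Lemma expand (F : fieldType) n (f : {poly F}) : (size f <= n)%N ->
  f = \sum_(i < n) f`_i *: 'X^i.
Proof. by move=> H; have := comp_sumE 'X H; rewrite comp_polyXr. Qed.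

Lemma key_mod m i j : (i < m)%N -> (j < m)%N -> ((i + m.-1 * j) %% m == 0)%N = (i == j).
Proof.
move=> im jm.
have e : (i + m.-1 * j + j = j * m + i)%N.
  by case: m im jm => //= n _ _; nia.
apply/eqP/eqP => [H|->].
  have := congr1 (fun x => (x + j) %% m)%N H.
  by rewrite /= modnDml add0n e modnMDl !modn_small.
have -> : (j + m.-1 * j = j * m)%N by clear e; case: m im jm => //= n _ _; nia.
by rewrite modnMl.
Qed.

Lemma tau_sum (F : fieldType) (d : {poly F}) n (A : 'I_n -> {poly F}) :
  ((\sum_(i < n) A i) %% d)`_0 = \sum_(i < n) ((A i) %% d)`_0.
Proof.
apply: (big_morph (fun p => (p %% d)`_0)).
  by move=> x y; rewrite modpD coefD.
by rewrite mod0p coef0.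
Qed.

Lemma ip_tau (F : fieldType) m (u w : {poly F}) : (0 < m)%N ->
  (size u <= m)%N -> (size w <= m)%N ->
  \sum_(i < m) u`_i * w`_i = ((u * cj m w) %% xm1 F m)`_0.
Proof.
move=> m0 su sw.
rewrite /cj (comp_sumE _ sw) {2}(expand su) mulr_suml tau_sum.
apply: eq_bigr => i _.
rewrite mulr_sumr tau_sum (bigD1 i) //= big1 ?addr0.
  rewrite -scalerAl -scalerAr modpZl coefZ modpZl coefZ -exprM -exprD Xn_mod //.
  by rewrite coefXn eq_sym key_mod // eqxx mulr1 mulrC.
move=> j ij.
rewrite -scalerAl -scalerAr modpZl coefZ modpZl coefZ -exprM -exprD Xn_mod //.
rewrite coefXn eq_sym key_mod //.
have nij : (i == j :> nat) = false by apply/negbTE; rewrite eq_sym; exact: ij.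
by rewrite nij !mulr0.
Qed.

Lemma sqfree (F : fieldType) m (D : {poly F}) : (0 < m)%N -> (m%:R : F) != 0 ->
  D * D %| xm1 F m -> D != 0 -> size D = 1%N.
Proof.
move=> m0 mF H D0.
have dX : D %| xm1 F m by apply: dvdp_trans H; apply: dvdp_mulIl.
have dX' : D %| (xm1 F m)^`().
  rewrite -(divpK H) derivM derivM; apply: dvdp_add.
    by apply: dvdp_mull; apply: dvdp_mulIl.
  by apply: dvdp_mull; apply: dvdp_add; [apply: dvdp_mulIr | apply: dvdp_mulIl].
have e : 'X * (xm1 F m)^`() - (xm1 F m) * m%:R = (m%:R : F)%:P.
  rewrite xm1E derivB derivXn -polyC1 derivC subr0.
  rewrite !mulrnAr -exprS prednK // mulr1 mulrnBl opprB addrC subrK polyC_natr polyC1.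
  by [].
have dC : D %| (m%:R : F)%:P by rewrite -e; apply: dvdp_sub; [exact: dvdp_mull dX' | exact: dvdp_mulr dX].
have := dvdp_leq _ dC; rewrite polyC_eq0 mF size_polyC mF => /(_ isT).
by move=> sD; apply/eqP; rewrite eqn_leq sD /= size_poly_gt0.
Qed.

Lemma dvd_subC (F : fieldType) (d a b : {poly F}) : d %| a - b -> d %| b - a.
Proof. by rewrite -opprB dvdpNr. Qed.

Lemma eqm_dvd (F : fieldType) (d X A B : {poly F}) : d %| X -> X %| A - B -> d %| B -> d %| A.
Proof.
move=> dX H dB; have -> : A = (A - B) + B by rewrite subrK.
by apply: dvdp_add => //; apply: dvdp_trans H.
Qed.

Lemma cong_add (F : fieldType) (X A1 A2 B1 B2 : {poly F}) :
  X %| A1 - B1 -> X %| A2 - B2 -> X %| (A1 + A2) - (B1 + B2).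
Proof.
move=> H1 H2; have -> : A1 + A2 - (B1 + B2) = (A1 - B1) + (A2 - B2) by ring.
exact: dvdp_add.
Qed.

Lemma cong_mul (F : fieldType) (X A1 A2 B1 B2 : {poly F}) :
  X %| A1 - B1 -> X %| A2 - B2 -> X %| (A1 * A2) - (B1 * B2).
Proof.
move=> H1 H2; have -> : A1 * A2 - B1 * B2 = (A1 - B1) * A2 + B1 * (A2 - B2) by ring.
by apply: dvdp_add; [apply: dvdp_mulr | apply: dvdp_mull].
Qed.

Lemma cong_mod (F : fieldType) (X p : {poly F}) : X %| (p %% X) - p.
Proof.
have e := divp_eq p X.
have -> : p %% X - p = - (p %/ X * X) by rewrite {2}e; ring.
by rewrite dvdpNr dvdp_mull.
Qed.

Unset Implicit Arguments.

Theorem lemma3p5 (F : finFieldType) (m : nat) (g11 g12 g22 : {poly F}) :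
  (0 < m)%N -> coprime #|F| m ->
  g11 %| xm1 F m -> g22 %| xm1 F m ->
  (size g12 < size g22)%N ->
  (g11 * g22) %| (xm1 F m * g12) ->
  let g := gcdp g11 g22 in
  let l := xm1 F m %/ lcmp g11 g22 in
  let g22' := g22 %/ g in
  let r22 := gcdp g22' (recip g22') in
  self_reciprocal g -> self_reciprocal l ->
  ~~ coprimep r22 (g11 * polybar m g11 + g12 * polybar m g12) ->
  ~ eucl_LCD m g11 g12 g22.
Proof.
move=> m0 cop d11 d22 s12 dM g l g22' r22 _ _ ncop LCD.
set X := xm1 F m.
have X0 : X != 0 by apply: xm1_neq0.
have sX : size X = m.+1 by apply: size_xm1.
have mF := natr_neq0 cop.
have g22n0 : g22 != 0.
  by apply: contraNneq X0 => g0; move: d22; rewrite g0 dvd0p => H; exact: H.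
have gg22 : g %| g22 := dvdp_gcdr _ _.
have eg22 : g22' * g = g22 := divpK gg22.
have g'g22 : g22' %| g22 by rewrite -eg22 dvdp_mulIl.
have g'0 : g22' != 0 by apply: contraNneq g22n0 => e0; rewrite -eg22 e0 mul0r.
set h := g11 * polybar m g11 + g12 * polybar m g12.
set d := gcdp r22 h.
have dr : d %| r22 := dvdp_gcdl _ _.
have dh : d %| h := dvdp_gcdr _ _.
have dg' : d %| g22' := dvdp_trans dr (dvdp_gcdl _ _).
have drec : d %| recip g22' := dvdp_trans dr (dvdp_gcdr _ _).
have dg22 : d %| g22 := dvdp_trans dg' g'g22.
have dX : d %| X := dvdp_trans dg22 d22.
have d0 : d != 0.
  by rewrite gcdp_eq0 negb_and gcdp_eq0 negb_and g'0.
have sd : (1 < size d)%N.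
  have h1 : size d != 1%N by move: ncop; rewrite coprimep_def.
  have h2 : (0 < size d)%N by rewrite size_poly_gt0.
  by move: h1 h2; case: (size d) => [|[|n]].
set P := X %/ d.
have ePd : P * d = X := divpK dX.
have P0 : P != 0 by apply: contraNneq X0 => e0; rewrite -ePd e0 mul0r.
have sP : (size P < size X)%N.
  rewrite -ePd size_mul //.
  move: sd; case: (size d) => [|[|k]] //= _.
  by rewrite !addnS /= ltnS leq_addr.
set a := cj m P.
have caP : X %| cj m a - P := cjcj P m0.
have s11 : (size g11 <= m.+1)%N by rewrite -sX dvdp_leq.
have s22 : (size g22 <= m.+1)%N by rewrite -sX dvdp_leq.
have s12' : (size g12 <= m.+1)%N by apply: leq_trans (ltnW s12) s22.
have s22' : (size g22' <= m.+1)%N by apply: leq_trans s22; apply: dvdp_leq.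
have cjv : forall f : {poly F}, X %| cj m ((a * f) %% X) - P * cj m f.
  move=> f; have := cj_cong m0 (cong_mod X (a * f)); rewrite -/X => H1.
  have H2 : X %| cj m (a * f) - P * cj m f.
    by rewrite cjM; apply: cong_mul => //; rewrite subrr dvdp0.
  have -> : cj m ((a * f) %% X) - P * cj m f =
     (cj m ((a * f) %% X) - cj m (a * f)) + (cj m (a * f) - P * cj m f) by ring.
  exact: dvdp_add.
have smod : forall f : {poly F}, (size (f %% X)%R <= m)%N.
  by move=> f; rewrite -ltnS -sX ltn_modp.
have vC : in_qc_code m g11 g12 g22 ((a * g11) %% X, (a * g12) %% X).
  by exists a, 0; rewrite mul0r addr0.
have vD : in_eucl_dual m g11 g12 g22 ((a * g11) %% X, (a * g12) %% X).
  split; rewrite ?smod //.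
  move=> c [a' [b' ->]].
  rewrite /eucl_ip big_split /= !ip_tau ?smod // -coefD -modpD.
  suff H : X %| ((a' * g11) %% X) * cj m ((a * g11) %% X)
             + ((a' * g12 + b' * g22) %% X) * cj m ((a * g12) %% X).
    by rewrite (modp_eq0 H) coef0.
  set T := a' * g11 * (P * cj m g11) + (a' * g12 + b' * g22) * (P * cj m g12).
  apply: (@eqm_dvd _ X X _ T) => //.
    by apply: cong_add; apply: cong_mul; rewrite ?cong_mod ?cjv.
  have -> : T = a' * (P * (g11 * cj m g11 + g12 * cj m g12)) + b' * (P * g22) * cj m g12.
    by rewrite /T; ring.
  apply: dvdp_add; last by apply: dvdp_mulr; apply: dvdp_mull; rewrite -ePd dvdp_mul2l.
  apply: dvdp_mull.
  apply: (@eqm_dvd _ X X _ (P * h)) => //.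
    apply: cong_mul; first by rewrite subrr dvdp0.
    apply: cong_add; apply: cong_mul; rewrite ?subrr ?dvdp0 //;
      apply: dvd_subC; apply: bar_cj => //.
  by rewrite -ePd dvdp_mul2l.
have := LCD _ vC vD; case => /modp_eq0P H0 _.
have H1 : X %| P * cj m g11.
  apply: (@eqm_dvd _ X X _ (cj m (a * g11))) => //.
    by rewrite cjM; apply: cong_mul; rewrite ?subrr ?dvdp0 // dvd_subC.
  exact: cj_dvd.
have dc11 : d %| cj m g11 by rewrite -(dvdp_mul2l _ _ P0) ePd.
have dc22 : d %| cj m g22'.
  apply: (@eqm_dvd _ d X _ (polybar m g22')) => //.
    by apply: dvd_subC; apply: bar_cj.
  by rewrite bar_recip // dvdp_mull.
set D := gcdp (cj m d) X.
have DX : D %| X := dvdp_gcdr _ _.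
have Dd : D %| cj m d := dvdp_gcdl _ _.
have Dgen : forall f : {poly F}, d %| cj m f -> D %| f.
  move=> f df; apply: (@eqm_dvd _ D X _ (cj m (cj m f))) => //.
    by apply: dvd_subC; apply: cjcj.
  by rewrite -(divpK df) cjM dvdp_mull.
have D11 : D %| g11 := Dgen _ dc11.
have D22' : D %| g22' := Dgen _ dc22.
have D22 : D %| g22 := dvdp_trans D22' g'g22.
have Dg : D %| g by rewrite dvdp_gcd D11 D22.
have DD : D * D %| X.
  by apply: dvdp_trans d22; rewrite -eg22; apply: dvdp_mul.
have D0 : D != 0 by rewrite gcdp_eq0 negb_and X0 orbT.
have sD := sqfree m0 mF DD D0.
have cop2 : coprimep X (cj m d) by rewrite coprimep_sym coprimep_def sD.
have XcP : X %| cj m P.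
  rewrite -(Gauss_dvdpl _ cop2) -cjM ePd.
  exact: cj_xm1.
have XP : X %| P.
  apply: (@eqm_dvd _ X X _ (cj m a)) => //.
    by apply: dvd_subC.
  exact: cj_dvd.
have := dvdp_leq P0 XP.
by rewrite leqNgt sP.
Qed.
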